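(* In the setting below, the limit $N=\lim_{t\to\infty}(S+tP)^{-1}$ satisfies $$N=S^{-1}-S^{-1}U(U^\top S^{-1}U)^{-1}U^\top S^{-1},$$ where $U^\top S^{-1}U$ is positive definite. In particular $N$ depends only on the sizes $p_i,q_i$ of the bipartition classes of the bipartite components of $G$ and on $s$.
   Context: Let $n\ge3$, $\ell>0$, $\alpha\ge(n-2)\ell$, $S=\alpha I_n+\ell\mathbf{1}_n\mathbf{1}_n^\top$. For a real matrix $P$, $\Delta_i(P)=|P_{ii}|-\sum_{j\ne i}|P_{ij}|$. A signless Laplacian is a real symmetric $n\times n$ matrix $P$ with $P_{ij}\in\{0,1\}$ for $i\ne j$, $P_{ii}\ge0$, and $\Delta_i(P)\in\{0,2\}$ for all $i$; its graph $G$ has vertex set $\{1,\dots,n\}$, an edge $\{i,j\}$ ($i\ne j$) whenever $P_{ij}=1$, and a self-loop $\{i,i\}$ whenever $\Delta_i(P)=2$ (graphs with self-loops are not bipartite). Relabel vertices so that the bipartite components $G_1,\dots,G_r$ come first, each occupying consecutive vertices with one bipartition class (of size $p_i\ge1$) listed first followed by the other (of size $q_i\ge0$), and the remaining $s=n-\sum_{i=1}^r(p_i+q_i)$ vertices lie in non-bipartite components. For $p\ge1,q\ge0$ let $U_{(p,q)}$ be the $(p+q)\times(p+q-1)$ matrix $$U_{(p,q)}=\begin{pmatrix}\mathbf{1}_{p-1}^\top&\mathbf{1}_q^\top\\-I_{p-1}&0\\0&I_q\end{pmatrix},$$ and let $U$ be the $n\times(n-r)$ block-diagonal matrix $U=\operatorname{diag}(U_{(p_1,q_1)},\dots,U_{(p_r,q_r)},I_s)$.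 *)

(* Defs.v *)
From HB Require Import structures.
From mathcomp Require Import all_boot all_order all_algebra.
Set Implicit Arguments. Unset Strict Implicit. Unset Printing Implicit Defensive.
Import Order.TTheory GRing.Theory Num.Theory.
Local Open Scope ring_scope.

Section Defs.
Variable R : realFieldType.

Definition Delta n (P : 'M[R]_n) (i : 'I_n) : R :=
  `|P i i| - \sum_(j < n | j != i) `|P i j|.

Definition signless_laplacian n (P : 'M[R]_n) : Prop :=
  [/\ P^T = P,
      (forall i j : 'I_n, i != j -> P i j = 0 \/ P i j = 1),
      (forall i : 'I_n, 0 <= P i i) &
      (forall i : 'I_n, Delta P i = 0 \/ Delta P i = 2)].

Definition gadj n (P : 'M[R]_n) : rel 'I_n := fun i j => (i != j) && (P i j == 1).
Definition gloop n (P : 'M[R]_n) (i : 'I_n) : bool := Delta P i == 2.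

Definition comp_bipartite n (P : 'M[R]_n) (v : 'I_n) : Prop :=
  exists c : 'I_n -> bool, forall x, connect (gadj P) v x ->
    ~~ gloop P x /\ (forall y, gadj P x y -> c x != c y).

Definition off r (p q : 'I_r -> nat) (i : 'I_r) : nat :=
  (\sum_(k < r | (k < i)%N) (p k + q k))%N.
Definition totB r (p q : 'I_r -> nat) : nat := (\sum_(k < r) (p k + q k))%N.
Definition inblock r (p q : 'I_r -> nat) (i : 'I_r) (v : nat) : bool :=
  (off p q i <= v < off p q i + (p i + q i))%N.
Definition inclass1 r (p q : 'I_r -> nat) (i : 'I_r) (v : nat) : bool :=
  (off p q i <= v < off p q i + p i)%N.

Definition coff r (p q : 'I_r -> nat) (i : 'I_r) : nat :=
  (\sum_(k < r | (k < i)%N) (p k + q k - 1))%N.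
Definition totC r (p q : 'I_r -> nat) : nat := (\sum_(k < r) (p k + q k - 1))%N.
Definition incolblock r (p q : 'I_r -> nat) (i : 'I_r) (c : nat) : bool :=
  (coff p q i <= c < coff p q i + (p i + q i - 1))%N.

(* The vertex labelling of the paper: bipartite components G_1..G_r occupy
   consecutive blocks, block i having its first bipartition class (size p i)
   first, then the other one (size q i); the remaining s vertices (the last
   ones) lie in non-bipartite components. *)
Definition bip_labelling n (P : 'M[R]_n) r (p q : 'I_r -> nat) (s : nat) : Prop :=
  [/\ (forall i, 0 < p i)%N,
      n = (totB p q + s)%N,
      (forall i (v w : 'I_n), inblock p q i v ->
          (connect (gadj P) v w <-> inblock p q i w)),
      (forall i (v w : 'I_n), inblock p q i v ->
          ~~ gloop P v /\ (gadj P v w -> inclass1 p q i v != inclass1 p q i w)) &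
      (forall v : 'I_n, (totB p q <= v)%N -> ~ comp_bipartite P v)].

Definition Uloc (p : nat) (a b : nat) : R :=
  if a == 0%N then 1
  else if b == a.-1 then (if (a < p)%N then -1 else 1) else 0.

(* U = diag(U_(p_1,q_1), ..., U_(p_r,q_r), I_s) *)
Definition Umat n r (p q : 'I_r -> nat) : 'M[R]_(n, n - r) :=
  \matrix_(v < n, c < n - r)
    ((\sum_(i < r) (if inblock p q i v && incolblock p q i c
                    then Uloc (p i) (v - off p q i) (c - coff p q i) else 0))
     + (if [&& (totB p q <= v)%N, (totC p q <= c)%N & (v - totB p q == c - totC p q)%N]
        then 1 else 0)).

Definition Smat n (alpha l : R) : 'M[R]_n := alpha%:M + const_mx l.

Definition posdef k (A : 'M[R]_k) : Prop :=
  A^T = A /\ forall x : 'cV[R]_k, x != 0 -> 0 < (x^T *m A *m x) 0 0.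

Definition mx_lim_infty m k (F : R -> 'M[R]_(m, k)) (L : 'M[R]_(m, k)) : Prop :=
  forall eps : R, 0 < eps -> exists T : R, forall t : R, T < t ->
    forall i j, `|F t i j - L i j| < eps.

End Defs.

(* Main.v *)
Require Import Defs.
From HB Require Import structures.
From mathcomp Require Import all_boot all_order all_algebra.
From mathcomp Require Import zify ring lra.
Set Implicit Arguments. Unset Strict Implicit. Unset Printing Implicit Defensive.
Import Order.TTheory GRing.Theory Num.Theory.
Local Open Scope ring_scope.

Section Off.
Variable r : nat.
Variable L : 'I_r -> nat.
Definition gm (m : nat) := (\sum_(k < r | (k < m)%N) L k)%N.
Definition gtot := (\sum_(k < r) L k)%N.

Lemma gmS m (Hm : (m < r)%N) : gm m.+1 = (gm m + L (Ordinal Hm))%N.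
Proof.
rewrite /gm (bigD1 (Ordinal Hm)) //= addnC; congr (_ + _)%N.
apply: eq_bigl => k /=; rewrite ltnS andbC -val_eqE /= -ltn_neqAle //.
Qed.

Lemma gm_mono m m' : (m <= m')%N -> (gm m <= gm m')%N.
Proof.
move=> H; rewrite /gm [X in (_ <= X)%N]big_mkcond [X in (X <= _)%N]big_mkcond /=.
apply: leq_sum => k _; case: ifP => // Hk.
by rewrite (leq_trans Hk H).
Qed.

Lemma gm_r : gm r = gtot.
Proof. by rewrite /gm; apply: eq_bigl => k; rewrite ltn_ord. Qed.

Lemma go_le (i j : 'I_r) : (i < j)%N -> (gm i + L i <= gm j)%N.
Proof.
move=> H; have := gmS (ltn_ord i); rewrite (_ : Ordinal _ = i); last exact: val_inj.
by move <-; apply: gm_mono.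
Qed.

Lemma go_tot (i : 'I_r) : (gm i + L i <= gtot)%N.
Proof.
have := gmS (ltn_ord i); rewrite (_ : Ordinal _ = i); last exact: val_inj.
by move <-; rewrite -gm_r; apply: gm_mono.
Qed.

Lemma go_uniq (i j : 'I_r) v :
  (gm i <= v < gm i + L i)%N -> (gm j <= v < gm j + L j)%N -> i = j.
Proof.
move=> /andP[H1 H2] /andP[H3 H4].
case: (ltngtP i j) => Hij; last exact: val_inj.
- have := go_le Hij; lia.
- have := go_le Hij; lia.
Qed.

Lemma go_cover v : (v < gtot)%N -> exists i : 'I_r, (gm i <= v < gm i + L i)%N.
Proof.
rewrite -gm_r.
suff : forall m, (m <= r)%N -> (v < gm m)%N -> exists i : 'I_r, (gm i <= v < gm i + L i)%N.
  by move=> H; apply: H.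
elim=> [|m IH] Hm.
  by rewrite /gm big_pred0.
have Hm' : (m < r)%N by [].
rewrite (gmS Hm') => Hv.
case: (ltnP v (gm m)) => Hv2.
  by apply: IH => //; apply: ltnW.
by exists (Ordinal Hm'); rewrite Hv2 Hv.
Qed.

End Off.

Lemma gtot_pred r (L : 'I_r -> nat) : (forall i, 0 < L i)%N ->
  gtot L = (gtot (fun k => L k - 1) + r)%N.
Proof.
move=> H; rewrite /gtot -[X in (_ + X)%N]card_ord -sum1_card -big_split /=.
by apply: eq_bigr => i _; rewrite subnK.
Qed.

Section Gen.
Variable R : realFieldType.

Definition ext m (x : 'I_m -> R) (k : nat) : R :=
  if insub k is Some i then x i else 0.

Lemma ext_ord m (x : 'I_m -> R) k (Hk : (k < m)%N) : ext x k = x (Ordinal Hk).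
Proof. by rewrite /ext insubT. Qed.

Lemma extE m (x : 'I_m -> R) (v : 'I_m) : ext x v = x v.
Proof. by rewrite /ext valK. Qed.

Lemma ext_out m (x : 'I_m -> R) k : (m <= k)%N -> ext x k = 0.
Proof. by move=> H; rewrite /ext insubN // -leqNgt. Qed.

Lemma sum_ind m (x : 'I_m -> R) k :
  \sum_(v < m) ((v : nat) == k)%:R * x v = ext x k.
Proof.
case: (ltnP k m) => Hk.
  rewrite (bigD1 (Ordinal Hk)) //= eqxx mul1r big1 ?addr0; first by rewrite ext_ord.
  move=> v Hv; suff -> : ((v : nat) == k) = false by rewrite mul0r.
  by apply/negbTE; apply: contra Hv => /eqP Hv; apply/eqP; apply: val_inj.
rewrite ext_out // big1 // => v _.
suff -> : ((v : nat) == k) = false by rewrite mul0r.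
by apply/negbTE; have := ltn_ord v; lia.
Qed.

Definition qf m (A : 'M[R]_m) (x : 'I_m -> R) :=
  \sum_i \sum_j x i * A i j * x j.

Lemma qf_row m (A : 'M[R]_m) (v : 'rV[R]_m) :
  (v *m A *m v^T) 0 0 = qf A (fun i => v 0 i).
Proof.
rewrite mxE /qf exchange_big /=; apply: eq_bigr => j _.
by rewrite !mxE mulr_suml; apply: eq_bigr => i _.
Qed.

Lemma qf_col m (A : 'M[R]_m) (v : 'cV[R]_m) :
  (v^T *m A *m v) 0 0 = qf A (fun i => v i 0).
Proof.
rewrite -{2}(trmxK v) qf_row /qf; apply: eq_bigr => i _; apply: eq_bigr => j _; by rewrite !mxE.
Qed.

Lemma qf_D m (A B : 'M[R]_m) x : qf (A + B) x = qf A x + qf B x.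
Proof.
rewrite /qf -big_split; apply: eq_bigr => i _; rewrite -big_split.
by apply: eq_bigr => j _; rewrite mxE /= mulrDr mulrDl.
Qed.

Lemma qf_Z m (a : R) (A : 'M[R]_m) x : qf (a *: A) x = a * qf A x.
Proof.
rewrite /qf mulr_sumr; apply: eq_bigr => i _; rewrite mulr_sumr.
by apply: eq_bigr => j _; rewrite mxE; ring.
Qed.

Lemma qf_scal m (a : R) x : qf (a%:M : 'M[R]_m) x = a * \sum_i x i ^+ 2.
Proof.
rewrite /qf mulr_sumr; apply: eq_bigr => i _.
rewrite (bigD1 i) //= big1 ?addr0; first by rewrite mxE eqxx mulr1n; ring.
by move=> j Hj; rewrite mxE eq_sym (negbTE Hj) mulr0n mulr0 mul0r.
Qed.

Lemma qf_const m (a : R) x : qf (const_mx a : 'M[R]_m) x = a * (\sum_i x i) ^+ 2.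
Proof.
rewrite /qf expr2 big_distrlr /= mulr_sumr; apply: eq_bigr => i _.
rewrite mulr_sumr; apply: eq_bigr => j _; rewrite mxE; ring.
Qed.

Lemma qf_ker m (A : 'M[R]_m) x : (forall i, \sum_j A i j * x j = 0) -> qf A x = 0.
Proof.
move=> H; rewrite /qf big1 // => i _.
apply: (etrans _ (_ : x i * (\sum_j A i j * x j) = 0)); last by rewrite H mulr0.
by rewrite mulr_sumr; apply: eq_bigr => j _; ring.
Qed.

Lemma qf_unit m (A : 'M[R]_m) :
  (forall v : 'rV[R]_m, v != 0 -> 0 < qf A (fun i => v 0 i)) -> A \in unitmx.
Proof.
move=> H; rewrite unitmxE unitfE; apply/negP => /det0P [v Hv HvA].
by have := H v Hv; rewrite -qf_row HvA mul0mx mxE ltxx.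
Qed.

Lemma sumsq_pos m (x : 'I_m -> R) k : x k != 0 -> 0 < \sum_i x i ^+ 2.
Proof.
move=> Hk; rewrite (bigD1 k) //=.
apply: (@lt_le_trans _ _ (x k ^+ 2)); first by rewrite lt0r sqrf_eq0 Hk sqr_ge0.
by rewrite lerDl; apply: sumr_ge0 => i _; apply: sqr_ge0.
Qed.

Lemma rV_neq0 m (v : 'rV[R]_m) : v != 0 -> exists k, v 0 k != 0.
Proof.
move=> Hv; apply/existsP; apply: contraR Hv; rewrite negb_exists => /forallP H.
apply/eqP/matrixP => i j; rewrite ord1 mxE; exact/eqP/negPn/H.
Qed.

Lemma cV_neq0 m (v : 'cV[R]_m) : v != 0 -> exists k, v k 0 != 0.
Proof.
move=> Hv; apply/existsP; apply: contraR Hv; rewrite negb_exists => /forallP H.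
apply/eqP/matrixP => i j; rewrite ord1 mxE; exact/eqP/negPn/H.
Qed.

Lemma ker_sub m1 m2 k (A : 'M[R]_(m1, k)) (B : 'M[R]_(m2, k)) :
  (forall v : 'cV[R]_k, B *m v = 0 -> A *m v = 0) -> (A <= B)%MS.
Proof.
move=> H; rewrite submxE; apply/eqP/matrixP => i j.
have Hc : B *m col j (cokermx B) = 0.
  apply/matrixP => a b; rewrite !mxE.
  have := congr1 (fun M : 'M[R]_(m2, k) => M a j) (mulmx_coker B); rewrite !mxE /= => E.
  apply: (etrans _ E); by apply: eq_bigr => k0 _; rewrite !mxE.
have := congr1 (fun M : 'M[R]_(m1, 1) => M i 0) (H _ Hc); rewrite !mxE => E.
apply: (etrans _ E); by apply: eq_bigr => k0 _; rewrite !mxE.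
Qed.

End Gen.

Lemma connect_inv (T : finType) (e : rel T) (I : T -> Prop) x y :
  I x -> (forall a b, I a -> e a b -> I b) -> connect e x y -> I y.
Proof.
move=> Ix He /connectP [pth Hp ->]; elim: pth x Ix Hp => [|z pth IH] x Ix //=.
by move=> /andP [Hxz Hp]; apply: IH (He _ _ Ix Hxz) Hp.
Qed.

Section Main.
Variable R : realFieldType.
Variable n : nat.
Variable P : 'M[R]_n.
Variables (r : nat) (p q : 'I_r -> nat) (s : nat).
Hypothesis HPT : P^T = P.
Hypothesis HPoff : forall i j : 'I_n, i != j -> P i j = 0 \/ P i j = 1.
Hypothesis HPd : forall i, 0 <= P i i.
Hypothesis HD : forall i, Delta P i = 0 \/ Delta P i = 2.
Hypothesis Hp : forall i, (0 < p i)%N.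
Hypothesis Hn : n = (totB p q + s)%N.
Hypothesis Hconn : forall i (v w : 'I_n), inblock p q i v ->
          (connect (gadj P) v w <-> inblock p q i w).
Hypothesis Hcls : forall i (v w : 'I_n), inblock p q i v ->
          ~~ gloop P v /\ (gadj P v w -> inclass1 p q i v != inclass1 p q i w).
Hypothesis Hnb : forall v : 'I_n, (totB p q <= v)%N -> ~ comp_bipartite P v.

Lemma L1pos i : (0 < (fun k => p k + q k) i)%N.
Proof. by have := Hp i; simpl; lia. Qed.

Lemma totBC : totB p q = (totC p q + r)%N.
Proof. exact: (gtot_pred L1pos). Qed.

Lemma nr : (n - r = totC p q + s)%N.
Proof. by rewrite Hn totBC; lia. Qed.

Lemma blk_tot i : (off p q i + (p i + q i) <= totB p q)%N.
Proof. exact: (go_tot (fun k => p k + q k)%N i). Qed.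

Lemma cblk_tot i : (coff p q i + (p i + q i - 1) <= totC p q)%N.
Proof. exact: (go_tot (fun k => p k + q k - 1)%N i). Qed.

Lemma blk_lt i (v : nat) : inblock p q i v -> (v < totB p q)%N.
Proof. by have := blk_tot i; rewrite /inblock; lia. Qed.

Lemma blk_uniq i j (v : nat) : inblock p q i v -> inblock p q j v -> i = j.
Proof. exact: (go_uniq (L := fun k => p k + q k)%N). Qed.

Lemma cblk_uniq i j (v : nat) : incolblock p q i v -> incolblock p q j v -> i = j.
Proof. exact: (go_uniq (L := fun k => p k + q k - 1)%N). Qed.

Lemma blk_cover v : (v < totB p q)%N -> exists i, inblock p q i v.
Proof. exact: (go_cover (L := fun k => p k + q k)%N). Qed.

Lemma cblk_cover v : (v < totC p q)%N -> exists i, incolblock p q i v.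
Proof. exact: (go_cover (L := fun k => p k + q k - 1)%N). Qed.

Lemma Psym i j : P i j = P j i.
Proof. by rewrite -[in LHS]HPT mxE. Qed.

Lemma P_ge0 i j : 0 <= P i j.
Proof.
case: (eqVneq i j) => [->|H]; first exact: HPd.
by case: (HPoff H) => ->; rewrite ?ler01.
Qed.

Lemma Pii u : P u u = Delta P u + \sum_(j | j != u) P u j.
Proof.
rewrite /Delta ger0_norm // (eq_bigr (fun j => P u j)); first by rewrite subrK.
by move=> j _; rewrite ger0_norm // P_ge0.
Qed.

Lemma gadj_sym u w : gadj P u w -> gadj P w u.
Proof. by rewrite /gadj eq_sym Psym. Qed.

Lemma qfP_row (x : 'I_n -> R) i :
  2 * (\sum_j x i * P i j * x j) =
  2 * Delta P i * x i ^+ 2 + \sum_(j | j != i) P i j * (x i + x j) ^+ 2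
  + (\sum_(j | j != i) P i j * x i ^+ 2 - \sum_(j | j != i) P i j * x j ^+ 2).
Proof.
rewrite (bigD1 i) //= Pii.
set A := \sum_(j | j != i) P i j.
set B := \sum_(j | j != i) x i * P i j * x j.
set C := \sum_(j | j != i) P i j * x j ^+ 2.
have E1 : \sum_(j | j != i) P i j * (x i + x j) ^+ 2 = A * x i ^+ 2 + 2 * B + C.
  rewrite /A /B /C mulr_suml mulr_sumr -!big_split /=.
  by apply: eq_bigr => j _; ring.
have E2 : \sum_(j | j != i) P i j * x i ^+ 2 = A * x i ^+ 2.
  by rewrite /A mulr_suml.
rewrite E1 E2; ring.
Qed.

Lemma swapP (x : 'I_n -> R) :
  \sum_i \sum_(j | j != i) P i j * x j ^+ 2 = \sum_i \sum_(j | j != i) P i j * x i ^+ 2.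
Proof.
rewrite (exchange_big_dep xpredT) //=; apply: eq_bigr => j _.
apply: eq_big => [i|i _]; first by rewrite eq_sym.
by rewrite Psym.
Qed.

Lemma qfP2 (x : 'I_n -> R) :
  2 * qf P x = \sum_i (2 * Delta P i * x i ^+ 2)
             + \sum_i \sum_(j | j != i) P i j * (x i + x j) ^+ 2.
Proof.
rewrite /qf mulr_sumr (eq_bigr _ (fun i _ => qfP_row x i)).
by rewrite big_split /= big_split /= sumrB swapP subrr addr0.
Qed.

Lemma Delta_ge0 i : 0 <= Delta P i.
Proof. by case: (HD i) => ->. Qed.

Lemma qfP_terms_ge0 (x : 'I_n -> R) :
  0 <= \sum_i (2 * Delta P i * x i ^+ 2) /\
  0 <= \sum_i \sum_(j | j != i) P i j * (x i + x j) ^+ 2.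
Proof.
split; apply: sumr_ge0 => i _.
  by apply: mulr_ge0; [apply: mulr_ge0; [lra | apply: Delta_ge0] | apply: sqr_ge0].
by apply: sumr_ge0 => j _; apply: mulr_ge0; [apply: P_ge0 | apply: sqr_ge0].
Qed.

Lemma qfP_ge0 (x : 'I_n -> R) : 0 <= qf P x.
Proof.
have [H1 H2] := qfP_terms_ge0 x; have := qfP2 x; lra.
Qed.

Lemma qfP_eq0 (x : 'I_n -> R) : qf P x = 0 ->
  (forall u, gloop P u -> x u = 0) /\ (forall u w, gadj P u w -> x u + x w = 0).
Proof.
move=> H0; have [H1 H2] := qfP_terms_ge0 x; have := qfP2 x; rewrite H0 mulr0 => E.
have Ea : \sum_i (2 * Delta P i * x i ^+ 2) = 0 by lra.
have Eb : \sum_i \sum_(j | j != i) P i j * (x i + x j) ^+ 2 = 0 by lra.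
split.
  move=> u Hu.
  have Hin1 : forall i, 0 <= 2 * Delta P i * x i ^+ 2.
    by move=> i; apply: mulr_ge0; [apply: mulr_ge0; [lra | apply: Delta_ge0] | apply: sqr_ge0].
  have := psumr_eq0P (fun i _ => Hin1 i) Ea (i := u) isT.
  move: Hu; rewrite /gloop => /eqP -> H.
  by apply/eqP; rewrite -sqrf_eq0; apply/eqP; lra.
move=> u w Huw.
have Hin : forall i, 0 <= \sum_(j | j != i) P i j * (x i + x j) ^+ 2.
  by move=> i; apply: sumr_ge0 => j _; apply: mulr_ge0; [apply: P_ge0 | apply: sqr_ge0].
have Eu := psumr_eq0P (fun i _ => Hin i) Eb (i := u) isT.
move: Huw; rewrite /gadj => /andP [Hne /eqP Hp1].
have Hin2 : forall j, 0 <= (if j != u then P u j * (x u + x j) ^+ 2 else 0).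
  by move=> j; case: ifP => _ //; apply: mulr_ge0; [apply: P_ge0 | apply: sqr_ge0].
rewrite big_mkcond /= in Eu.
have := psumr_eq0P (fun j _ => Hin2 j) Eu (i := w) isT.
rewrite eq_sym Hne Hp1 mul1r => H.
by apply/eqP; rewrite -sqrf_eq0; apply/eqP.
Qed.


Definition Kern (x : 'I_n -> R) : Prop :=
  (forall i a, (a < p i + q i)%N ->
     ext x (off p q i + a) = if (a < p i)%N then ext x (off p q i) else - ext x (off p q i))
  /\ (forall v : 'I_n, (totB p q <= v)%N -> x v = 0).

Lemma ker1 (x : 'I_n -> R) :
  (forall u, gloop P u -> x u = 0) -> (forall u w, gadj P u w -> x u + x w = 0) -> Kern x.
Proof.
move=> Hl He; split.
  move=> i a Ha.
  have Hb := blk_tot i; have Hpi := Hp i.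
  have H0 : (off p q i < n)%N by rewrite Hn; lia.
  have Ha' : (off p q i + a < n)%N by rewrite Hn; lia.
  rewrite (ext_ord x H0) (ext_ord x Ha').
  set v0 := Ordinal H0; set w := Ordinal Ha'.
  have Iv0 : inblock p q i v0 by rewrite /inblock /=; lia.
  have Iw : inblock p q i w by rewrite /inblock /=; lia.
  have Hc : connect (gadj P) v0 w by exact: (Hconn w Iv0).2 Iw.
  have Cv0 : inclass1 p q i v0 by rewrite /inclass1 /=; lia.
  pose I := fun y : 'I_n => inblock p q i y /\
             x y = if inclass1 p q i y then x v0 else - x v0.
  have Cw : inclass1 p q i w = (a < p i)%N by apply/idP/idP; rewrite /inclass1 /=; lia.
  have HI0 : I v0 by split=> //; rewrite Cv0.
  have Hst : forall y z, I y -> gadj P y z -> I z.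
    move=> y z [Iy Ey] Hyz.
    have Iz : inblock p q i z by apply: (Hconn z Iy).1; apply: connect1.
    split=> //.
    have [_ Hd] := Hcls z Iy.
    have := Hd Hyz; have := He y z Hyz => Hs.
    have Ez : x z = - x y by lra.
    rewrite Ez Ey.
    by case: (inclass1 p q i y); case: (inclass1 p q i z) => //= _; rewrite opprK.
  have [_ ->] := connect_inv HI0 Hst Hc.
  by rewrite Cw.
move=> v Hv; apply/eqP; apply: contraT => Hx.
exfalso; apply: (Hnb Hv).
exists (fun y => 0 < x y) => y Hy.
have Jy : x y = x v \/ x y = - x v.
  apply: (connect_inv (I := fun y => x y = x v \/ x y = - x v) _ _ Hy); first by left.
  move=> a b Ia Hab; have := He a b Hab => Hs.
  by case: Ia => Ea; [right|left]; lra.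
have Hy0 : x y != 0 by case: Jy => ->; rewrite ?oppr_eq0.
split.
  by apply/negP => Hly; rewrite (Hl y Hly) eqxx in Hy0.
move=> z Hyz; have := He y z Hyz => Hs.
have Ez : x z = - x y by lra.
rewrite Ez oppr_gt0; case: (ltrgtP (x y) 0) => // h.
by rewrite h eqxx in Hy0.
Qed.

Lemma blkval (x : 'I_n -> R) i (y : 'I_n) : Kern x -> inblock p q i y ->
  x y = if inclass1 p q i y then ext x (off p q i) else - ext x (off p q i).
Proof.
move=> [K1 _] Hy.
have Hy' := Hy; move: Hy'; rewrite /inblock => /andP [H1 H2].
have := K1 i (y - off p q i)%N; rewrite subnKC // extE => ->; last by lia.
have -> : inclass1 p q i y = (y - off p q i < p i)%N.
  by apply/idP/idP; rewrite /inclass1; lia.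
by [].
Qed.

Lemma ker2 (x : 'I_n -> R) : Kern x -> forall u, \sum_w P u w * x w = 0.
Proof.
move=> Kx u; have [_ K2] := Kx; rewrite (bigD1 u) //=.
case: (ltnP u (totB p q)) => Hu.
  have [i Hi] := blk_cover Hu.
  have [Hnl _] := Hcls u Hi.
  have HD0 : Delta P u = 0.
    by case: (HD u) => // H; move: Hnl; rewrite /gloop H eqxx.
  rewrite Pii HD0 add0r mulr_suml -big_split big1 //= => w Hw.
  case: (HPoff (i := u) (j := w) _); first by rewrite eq_sym.
    by move=> ->; rewrite !mul0r addr0.
  move=> Huw.
  have Hg : gadj P u w by rewrite /gadj eq_sym Hw Huw eqxx.
  have Iw : inblock p q i w by apply: (Hconn w Hi).1; apply: connect1.
  have := (Hcls w Hi).2 Hg.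
  rewrite (blkval Kx Hi) (blkval Kx Iw) Huw.
  by case: (inclass1 p q i u); case: (inclass1 p q i w) => //= _; ring.
rewrite (K2 u Hu) mulr0 add0r big1 // => w Hw.
case: (HPoff (i := u) (j := w) _); first by rewrite eq_sym.
  by move=> ->; rewrite mul0r.
move=> Huw; rewrite (K2 w) ?mulr0 //.
case: (ltnP w (totB p q)) => Hw2 //.
have [j Hj] := blk_cover Hw2.
have Hg : gadj P w u by apply: gadj_sym; rewrite /gadj eq_sym Hw Huw eqxx.
have : inblock p q j u by apply: (Hconn u Hj).1; apply: connect1.
move=> /blk_lt; lia.
Qed.



Local Notation Uo := (@Umat R n r p q).

Lemma Ucol_blk i (c : 'I_(n - r)) (v : 'I_n) : incolblock p q i c ->
  Uo v c = ((v : nat) == off p q i)%N%:R +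
    (if ((c - coff p q i).+1 < p i)%N then -1 else 1) *
    ((v : nat) == off p q i + (c - coff p q i).+1)%N%:R.
Proof.
move=> Hc; have Htc := cblk_tot i; have Hpi := Hp i.
rewrite mxE (bigD1 i) //= Hc andbT big1 => [|j Hj]; last first.
  rewrite (_ : incolblock p q j c = false) ?andbF //.
  apply/negbTE; apply: contra Hj => Hj; apply/eqP; exact: cblk_uniq Hj Hc.
have -> : [&& (totB p q <= v)%N, (totC p q <= c)%N & (v - totB p q == c - totC p q)%N] = false.
  by apply/negbTE; move: Hc; rewrite /incolblock; lia.
rewrite /Uloc.
move: Hc; rewrite /incolblock => Hc.
case Hv: (inblock p q i v).
  move: Hv; rewrite /inblock => Hv.
  case: (eqVneq (v : nat) (off p q i)) => Hv0.
    rewrite Hv0 subnn eqxx /=.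
    have -> : (off p q i == off p q i + (c - coff p q i).+1)%N = false.
      by apply/negbTE; lia.
    by rewrite /= ?mulr1n ?mulr0n; ring.
  have -> : (v - off p q i == 0)%N = false by apply/negbTE; lia.
  case: (eqVneq (c - coff p q i)%N (v - off p q i).-1) => Hb.
    have -> : ((v : nat) == off p q i + (c - coff p q i).+1) = true by apply/eqP; lia.
    have -> : (c - coff p q i).+1 = (v - off p q i)%N by lia.
    by rewrite /= ?mulr1n ?mulr0n; ring.
  have -> : ((v : nat) == off p q i + (c - coff p q i).+1) = false by apply/negbTE; lia.
  by rewrite /= ?mulr1n ?mulr0n; ring.
move/negbT: Hv; rewrite /inblock => Hv.
have -> : ((v : nat) == off p q i) = false by apply/negbTE; lia.
have -> : ((v : nat) == off p q i + (c - coff p q i).+1) = false by apply/negbTE; lia.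
by rewrite /= ?mulr1n ?mulr0n; ring.
Qed.

Lemma Ucol_tail (c : 'I_(n - r)) (v : 'I_n) : (totC p q <= c)%N ->
  Uo v c = ((v : nat) == totB p q + (c - totC p q))%N%:R.
Proof.
move=> Hc; rewrite mxE big1 => [|j _]; last first.
  have Hj2 := cblk_tot j.
  by rewrite (_ : incolblock p q j c = false) ?andbF //; apply/negbTE; rewrite /incolblock; lia.
have -> : [&& (totB p q <= v)%N, (totC p q <= c)%N & (v - totB p q == c - totC p q)%N]
   = ((v : nat) == totB p q + (c - totC p q))%N.
  by apply/idP/idP; lia.
by rewrite add0r; case: (_ == _).
Qed.

Lemma Urow_blk i (v : 'I_n) (c : 'I_(n - r)) : inblock p q i v -> (0 < v - off p q i)%N ->
  Uo v c = (if (v - off p q i < p i)%N then -1 else 1) *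
           ((c : nat) == coff p q i + (v - off p q i).-1)%N%:R.
Proof.
move=> Hv Ha; have Htc := cblk_tot i; have Hpi := Hp i; have Hvt := blk_lt Hv.
rewrite mxE (bigD1 i) //= Hv /= big1 => [|j Hj]; last first.
  rewrite (_ : inblock p q j v = false) //.
  apply/negbTE; apply: contra Hj => Hj; apply/eqP; exact: blk_uniq Hj Hv.
have -> : [&& (totB p q <= v)%N, (totC p q <= c)%N & (v - totB p q == c - totC p q)%N] = false.
  by apply/negbTE; lia.
rewrite /Uloc.
have -> : (v - off p q i == 0)%N = false by apply/negbTE; lia.
move: Hv; rewrite /inblock => Hv.
case Hc: (incolblock p q i c).
  move: Hc; rewrite /incolblock => Hc.
  case: (eqVneq (c - coff p q i)%N (v - off p q i).-1) => Hb.
    have -> : ((c : nat) == coff p q i + (v - off p q i).-1) = true by apply/eqP; lia.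
    by rewrite /= ?mulr1n ?mulr0n; ring.
  have -> : ((c : nat) == coff p q i + (v - off p q i).-1) = false by apply/negbTE; lia.
  by rewrite /= ?mulr1n ?mulr0n; ring.
move/negbT: Hc; rewrite /incolblock => Hc.
have -> : ((c : nat) == coff p q i + (v - off p q i).-1) = false by apply/negbTE; lia.
by rewrite /= ?mulr1n ?mulr0n; ring.
Qed.

Lemma Urow_tail (v : 'I_n) (c : 'I_(n - r)) : (totB p q <= v)%N ->
  Uo v c = ((c : nat) == totC p q + (v - totB p q))%N%:R.
Proof.
move=> Hv; rewrite mxE big1 => [|j _]; last first.
  have Hj2 := blk_tot j.
  by rewrite (_ : inblock p q j v = false) //; apply/negbTE; rewrite /inblock; lia.
have -> : [&& (totB p q <= v)%N, (totC p q <= c)%N & (v - totB p q == c - totC p q)%N]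
   = ((c : nat) == totC p q + (v - totB p q))%N.
  by apply/idP/idP; lia.
by rewrite add0r; case: (_ == _).
Qed.

Lemma UTsum_blk i (c : 'I_(n - r)) (x : 'I_n -> R) : incolblock p q i c ->
  \sum_v Uo v c * x v = ext x (off p q i) +
    (if ((c - coff p q i).+1 < p i)%N then -1 else 1) * ext x (off p q i + (c - coff p q i).+1)%N.
Proof.
move=> Hc.
rewrite (eq_bigr (fun v : 'I_n => ((v : nat) == off p q i)%N%:R * x v +
   (if ((c - coff p q i).+1 < p i)%N then -1 else 1) *
   (((v : nat) == off p q i + (c - coff p q i).+1)%N%:R * x v))); last first.
  by move=> v _; rewrite (Ucol_blk v Hc); ring.
by rewrite big_split /= -mulr_sumr !sum_ind.
Qed.

Lemma UTsum_tail (c : 'I_(n - r)) (x : 'I_n -> R) : (totC p q <= c)%N ->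
  \sum_v Uo v c * x v = ext x (totB p q + (c - totC p q))%N.
Proof.
move=> Hc; rewrite -sum_ind; apply: eq_bigr => v _; by rewrite Ucol_tail.
Qed.

Lemma Usum_blk i (v : 'I_n) (y : 'I_(n - r) -> R) : inblock p q i v -> (0 < v - off p q i)%N ->
  \sum_c Uo v c * y c = (if (v - off p q i < p i)%N then -1 else 1) *
           ext y (coff p q i + (v - off p q i).-1)%N.
Proof.
move=> Hv Ha; rewrite -sum_ind mulr_sumr; apply: eq_bigr => c _.
by rewrite (Urow_blk c Hv Ha) mulrA.
Qed.

Lemma Usum_tail (v : 'I_n) (y : 'I_(n - r) -> R) : (totB p q <= v)%N ->
  \sum_c Uo v c * y c = ext y (totC p q + (v - totB p q))%N.
Proof.
move=> Hv; rewrite -sum_ind; apply: eq_bigr => c _; by rewrite Urow_tail.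
Qed.

Lemma ext_zero (x : 'I_n -> R) k : (forall v : 'I_n, (totB p q <= v)%N -> x v = 0) ->
  (totB p q <= k)%N -> ext x k = 0.
Proof.
move=> H Hk; case: (ltnP k n) => Hkn; last exact: ext_out.
by rewrite (ext_ord x Hkn); apply: H.
Qed.

Lemma UT_ker (x : 'I_n -> R) :
  (forall c : 'I_(n - r), \sum_v Uo v c * x v = 0) <-> Kern x.
Proof.
have Hnr := nr.
split=> [Z|[K1 K2] c].
  split.
    move=> i a Ha; have Hpi := Hp i.
    case: (eqVneq a 0%N) => [->|Ha0]; first by rewrite addn0 Hpi.
    have Htc := cblk_tot i.
    have Hc : (coff p q i + a.-1 < n - r)%N by lia.
    have Hcb : incolblock p q i (Ordinal Hc) by rewrite /incolblock /=; lia.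
    have := Z (Ordinal Hc); rewrite (UTsum_blk x Hcb) /=.
    have -> : (coff p q i + a.-1 - coff p q i).+1 = a by lia.
    by case: (a < p i)%N => E; lra.
  move=> v Hv.
  have Hc : (totC p q + (v - totB p q) < n - r)%N by have := ltn_ord v; lia.
  have := Z (Ordinal Hc); rewrite UTsum_tail /=; last by lia.
  have -> : (totB p q + (totC p q + (v - totB p q) - totC p q) = v)%N by lia.
  by rewrite extE.
case: (ltnP c (totC p q)) => Hc.
  have [i Hi] := cblk_cover Hc.
  rewrite (UTsum_blk x Hi).
  have Hb : ((c - coff p q i).+1 < p i + q i)%N by move: Hi; rewrite /incolblock; lia.
  rewrite (K1 i _ Hb).
  by case: (_ < p i)%N; ring.
rewrite UTsum_tail //; apply: ext_zero => //; lia.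
Qed.

Lemma U_inj (y : 'I_(n - r) -> R) :
  (forall v : 'I_n, \sum_c Uo v c * y c = 0) -> forall c, y c = 0.
Proof.
move=> Z c; have Hnr := nr; have Hcn := ltn_ord c.
case: (ltnP c (totC p q)) => Hc.
  have [i Hi] := cblk_cover Hc.
  have Hbt := blk_tot i; have Hpi := Hp i.
  move: (Hi); rewrite /incolblock => Hi'.
  have Hv : (off p q i + (c - coff p q i).+1 < n)%N by lia.
  have Iv : inblock p q i (Ordinal Hv) by rewrite /inblock /=; lia.
  have := Z (Ordinal Hv); rewrite (Usum_blk y Iv) /=; last by lia.
  have -> : (coff p q i + (off p q i + (c - coff p q i).+1 - off p q i).-1 = c)%N by lia.
  by rewrite extE; case: (_ < p i)%N => E; lra.
have Hv : (totB p q + (c - totC p q) < n)%N by lia.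
have := Z (Ordinal Hv); rewrite Usum_tail /=; last by lia.
have -> : (totC p q + (totB p q + (c - totC p q) - totB p q) = c)%N by lia.
by rewrite extE.
Qed.



Lemma range1 : exists Y : 'M[R]_(n, n - r), Uo = P *m Y.
Proof.
have : (Uo^T <= P)%MS.
  apply: ker_sub => v Pv.
  pose x := fun i => v i 0.
  have Hx : forall u, \sum_w P u w * x w = 0.
    move=> u; have := congr1 (fun M : 'cV[R]_n => M u 0) Pv; rewrite !mxE => E; apply: (etrans _ E).
    by apply: eq_bigr.
  have [Hl He] := qfP_eq0 (qf_ker Hx).
  have := (UT_ker x).2 (ker1 Hl He) => Z.
  apply/matrixP => c j; rewrite ord1 !mxE; apply: (etrans _ (Z c)).
  by apply: eq_bigr => w _; rewrite [in LHS]mxE.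
move/submxP => [D HD']; exists D^T.
by rewrite -(trmxK Uo) HD' trmx_mul HPT.
Qed.

Lemma range2 : exists E : 'M[R]_(n, n - r), P = E *m Uo^T.
Proof.
have : (P <= Uo^T)%MS.
  apply: ker_sub => v Uv.
  pose x := fun i => v i 0.
  have Z : forall c : 'I_(n - r), \sum_w Uo w c * x w = 0.
    move=> c; have := congr1 (fun M : 'cV[R]_(n - r) => M c 0) Uv; rewrite !mxE => E; apply: (etrans _ E).
    by apply: eq_bigr => w _; rewrite [in RHS]mxE.
  have H := ker2 ((UT_ker x).1 Z).
  apply/matrixP => u j; rewrite ord1 !mxE; apply: (etrans _ (H u)).
  by apply: eq_bigr.
by move/submxP => [D HD']; exists D.
Qed.

Lemma Ufull (y : 'cV[R]_(n - r)) : Uo *m y = 0 -> y = 0.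
Proof.
move=> Uy; pose z := fun c => y c 0.
have Z : forall v : 'I_n, \sum_c Uo v c * z c = 0.
  move=> v; have := congr1 (fun M : 'cV[R]_n => M v 0) Uy; rewrite !mxE => E; apply: (etrans _ E).
  by apply: eq_bigr.
have H := U_inj Z.
by apply/matrixP => c j; rewrite ord1 mxE; apply: H.
Qed.

End Main.


Lemma le_sum1 (R : realFieldType) (I : finType) (F : I -> R) i :
  (forall j, 0 <= F j) -> F i <= \sum_j F j.
Proof.
move=> H; rewrite (bigD1 i) //= lerDl; exact: sumr_ge0.
Qed.

Lemma real_bound (R : realFieldType) (a Sm xk xj : R) :
  0 < a -> a * Sm <= xk -> xk ^+ 2 <= Sm -> xj ^+ 2 <= Sm -> `|xj| <= a^-1.
Proof.
move=> Ha H1 H2 H3.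
have Hy : `|xj| ^+ 2 = xj ^+ 2 by rewrite real_normK // num_real.
have Hy0 : 0 <= `|xj| by [].
rewrite -(ler_pM2l Ha) mulfV ?gt_eqF //.
have Hsq0 : 0 <= xj ^+ 2 by apply: sqr_ge0.
have Hk0 : 0 <= xk ^+ 2 by apply: sqr_ge0.
have HS0 : 0 <= Sm by lra.
have Hxk : 0 <= xk by nra.
have Haxk : a * xk <= 1.
  case: (ltrgtP xk 0) => Hc; first lra.
    by nra.
  rewrite Hc mulr0; lra.
have : (a * `|xj|) ^+ 2 <= 1.
  rewrite exprMn Hy.
  have : a ^+ 2 * xj ^+ 2 <= a ^+ 2 * Sm by rewrite ler_pM2l ?exprn_gt0.
  nra.
have Hay : 0 <= a * `|xj| by rewrite mulr_ge0 // ltW.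
nra.
Qed.

Section Anal.
Variable R : realFieldType.
Variables n m : nat.
Variables (S P : 'M[R]_n) (U Y E : 'M[R]_(n, m)) (alpha : R).
Hypothesis Ha : 0 < alpha.
Hypothesis HS : forall x, alpha * \sum_i x i ^+ 2 <= qf S x.
Hypothesis HST : S^T = S.
Hypothesis HP : forall x, 0 <= qf P x.
Hypothesis HY : U = P *m Y.
Hypothesis HE : P = E *m U^T.
Hypothesis HU : forall y : 'cV[R]_m, U *m y = 0 -> y = 0.

Lemma qfM t x : 0 <= t -> alpha * \sum_i x i ^+ 2 <= qf (S + t *: P) x.
Proof.
move=> Ht; rewrite qf_D qf_Z; have := HS x; have := HP x => H1 H2.
have : 0 <= t * qf P x by apply: mulr_ge0.
lra.
Qed.

Lemma M_unit t : 0 <= t -> S + t *: P \in unitmx.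
Proof.
move=> Ht; apply: qf_unit => v Hv.
have [k Hk] := rV_neq0 Hv.
have H2 := sumsq_pos (x := fun i => v 0 i) Hk; have H1 := qfM (fun i => v 0 i) Ht.
have H3 := mulr_gt0 Ha H2.
lra.
Qed.

Lemma S_unit : S \in unitmx.
Proof. by have := M_unit (lexx 0); rewrite scale0r addr0. Qed.

Lemma Si_pos (z : 'cV[R]_n) : z != 0 -> 0 < (z^T *m invmx S *m z) 0 0.
Proof.
move=> Hz; set w := invmx S *m z.
have Hzw : z = S *m w by rewrite /w mulKVmx // S_unit.
have Hw : w != 0.
  by apply: contra Hz => /eqP Hw0; rewrite Hzw Hw0 mulmx0.
rewrite -mulmxA -/w {1}Hzw trmx_mul HST qf_col.
have [k Hk] := cV_neq0 Hw.
have H2 := sumsq_pos (x := fun i => w i 0) Hk; have H1 := HS (fun i => w i 0).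
have H3 := mulr_gt0 Ha H2.
lra.
Qed.

Lemma G_posdef : posdef (U^T *m invmx S *m U).
Proof.
split.
  by rewrite !trmx_mul trmxK trmx_inv HST mulmxA.
move=> x Hx.
have HUx : U *m x != 0 by apply: contra Hx => /eqP /HU ->.
have := Si_pos HUx.
by rewrite trmx_mul !mulmxA.
Qed.

Lemma G_unit : U^T *m invmx S *m U \in unitmx.
Proof.
apply: qf_unit => v Hv.
have [_ H] := G_posdef.
have Hv' : v^T != 0 by apply: contra Hv => /eqP H0; rewrite -(trmxK v) H0 trmx0.
have := H _ Hv'; rewrite trmxK qf_row.
by [].
Qed.

Lemma Mbound t (k j : 'I_n) : 0 <= t -> `|invmx (S + t *: P) k j| <= alpha^-1.
Proof.
move=> Ht; set M := S + t *: P; have HM := M_unit Ht.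
set x := row k (invmx M).
have Hx : x *m M = delta_mx 0 k.
  by rewrite /x -row_mul mulVmx // rowE mulmx1.
have Hq : qf M (fun i => x 0 i) = x 0 k.
  by rewrite -qf_row Hx -rowE !mxE.
have := qfM (fun i => x 0 i) Ht; rewrite -/M Hq => H1.
have H2 : forall i, x 0 i ^+ 2 <= \sum_i0 x 0 i0 ^+ 2.
  by move=> i; rewrite (bigD1 i) //= lerDl; apply: sumr_ge0 => i0 _; apply: sqr_ge0.
have := real_bound Ha H1 (H2 k) (H2 j).
by rewrite /x mxE.
Qed.

Definition Nlim := invmx S - invmx S *m U *m invmx (U^T *m invmx S *m U) *m U^T *m invmx S.
Definition Cm := invmx (U^T *m invmx S *m U) *m U^T *m invmx S.

Lemma key t : 0 < t ->
  t *: (invmx (S + t *: P) - Nlim) = Y *m Cm - invmx (S + t *: P) *m (S *m Y *m Cm).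
Proof.
move=> Ht; set M := S + t *: P; have HM := M_unit (ltW Ht).
set Mi := invmx M.
have HN : Nlim = invmx S - invmx S *m U *m Cm by rewrite /Nlim /Cm !mulmxA.
have UtN : U^T *m Nlim = 0.
  rewrite HN mulmxBr !mulmxA mulmxV ?G_unit // mul1mx.
  by rewrite subrr.
have PN : P *m Nlim = 0 by rewrite HE -mulmxA UtN mulmx0.
have MN : M *m Nlim = S *m Nlim.
  by rewrite /M mulmxDl -scalemxAl PN scaler0 addr0.
have E1 : Mi - Nlim = Mi *m (1%:M - S *m Nlim).
  by rewrite mulmxBr mulmx1 -MN mulmxA mulVmx // mul1mx.
have E2 : 1%:M - S *m Nlim = U *m Cm.
  rewrite HN mulmxBr mulmxV ?S_unit // !mulmxA mulmxV ?S_unit // mul1mx.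
  by rewrite opprB addrC subrK.
have E3 : (t *: Mi) *m P = 1%:M - Mi *m S.
  rewrite -scalemxAl scalemxAr (_ : t *: P = M - S); last by rewrite /M addrC addKr.
  by rewrite mulmxBr mulVmx.
rewrite E1 E2 HY !mulmxA !scalemxAl E3.
by rewrite !mulmxBl mul1mx.
Qed.

Lemma lim_main : mx_lim_infty (fun t => invmx (S + t *: P)) Nlim.
Proof.
move=> eps Heps.
set W1 := Y *m Cm; set W2 := S *m Y *m Cm.
set B := \sum_i \sum_j `|W1 i j| + alpha^-1 * \sum_k \sum_j `|W2 k j|.
have HB0 : 0 <= B.
  rewrite /B addr_ge0 // ?mulr_ge0 ?invr_ge0 ?(ltW Ha) //;
  by apply: sumr_ge0 => i _; apply: sumr_ge0 => j _.
exists (B / eps) => t Ht i j.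
have Ht0 : 0 < t by apply: (le_lt_trans _ Ht); rewrite divr_ge0 // ltW.
have HtB : B < eps * t by move: Ht; rewrite ltr_pdivrMr // mulrC.
have K : t * (invmx (S + t *: P) i j - Nlim i j) = W1 i j - (invmx (S + t *: P) *m W2) i j.
  have := congr1 (fun M : 'M[R]_n => M i j) (key Ht0).
  rewrite [X in X = _ -> _]mxE [X in _ * X = _ -> _]mxE [X in _ = X -> _]mxE.
  rewrite [X in _ * (_ + X) = _ -> _]mxE [X in _ = _ + X -> _]mxE.
  by move=> E0; exact: E0.
have Hb1 : `|W1 i j| <= \sum_i \sum_j `|W1 i j|.
  rewrite (bigD1 i) //= (bigD1 j) //=.
  have H1 : 0 <= \sum_(j0 | j0 != j) `|W1 i j0| by apply: sumr_ge0.
  have H2 : 0 <= \sum_(i0 | i0 != i) \sum_j0 `|W1 i0 j0|.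
    by apply: sumr_ge0 => i0 _; apply: sumr_ge0.
  lra.
have Hb2 : `|(invmx (S + t *: P) *m W2) i j| <= alpha^-1 * \sum_k \sum_j `|W2 k j|.
  rewrite mxE; apply: (le_trans (ler_norm_sum _ _ _)).
  apply: (@le_trans _ _ (\sum_k0 alpha^-1 * `|W2 k0 j|)).
    apply: ler_sum => k0 _; rewrite normrM ler_wpM2r //.
    exact: Mbound (ltW Ht0).
  rewrite -mulr_sumr ler_wpM2l ?invr_ge0 ?(ltW Ha) //.
  apply: ler_sum => k0 _; rewrite (bigD1 j) //= lerDl; exact: sumr_ge0.
have Hd : `|invmx (S + t *: P) i j - Nlim i j| * t <= B.
  have -> : `|invmx (S + t *: P) i j - Nlim i j| * t =
            `|t * (invmx (S + t *: P) i j - Nlim i j)|.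
    by rewrite normrM (ger0_norm (ltW Ht0)) mulrC.
  rewrite K.
  apply: (le_trans (ler_normB _ _)).
  rewrite /B; lra.
have : `|invmx (S + t *: P) i j - Nlim i j| * t < eps * t by apply: (le_lt_trans Hd HtB).
by rewrite ltr_pM2r.
Qed.

End Anal.

Theorem proposition4p7 (R : realFieldType) (n : nat) (l alpha : R)
  (P : 'M[R]_n) (r : nat) (p q : 'I_r -> nat) (s : nat) :
  (3 <= n)%N -> 0 < l -> (n - 2)%:R * l <= alpha ->
  signless_laplacian P ->
  bip_labelling P p q s ->
  let S := Smat n alpha l in
  let U := @Umat R n r p q in
  [/\ S \in unitmx,
      (exists T : R, forall t : R, T < t -> S + t *: P \in unitmx),
      posdef (U^T *m invmx S *m U) &
      mx_lim_infty (fun t => invmx (S + t *: P))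
        (invmx S - invmx S *m U *m invmx (U^T *m invmx S *m U) *m U^T *m invmx S)].
Proof.
move=> Hn3 Hl Hal [HPT HPoff HPd HD] [Hp Hn Hconn Hcls Hnb] S U.
have Ha : 0 < alpha.
  have H1 : (1 : R) <= (n - 2)%:R by rewrite ler1n; lia.
  nra.
have HS : forall x, alpha * \sum_i x i ^+ 2 <= qf S x.
  move=> x; rewrite /S /Smat qf_D qf_scal qf_const.
  have : 0 <= l * (\sum_i x i) ^+ 2 by apply: mulr_ge0; [apply: ltW | apply: sqr_ge0].
  lra.
have HST : S^T = S.
  by apply/matrixP => i j; rewrite !mxE eq_sym.
have HP := qfP_ge0 HPT HPoff HPd HD.
have [Y HY] := range1 HPT HPoff HPd HD Hp Hn Hconn Hcls Hnb.
have [E HE] := range2 HPT HPoff HPd HD Hp Hn Hconn Hcls.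
have HU := Ufull (R := R) Hp Hn.
split.
- exact: S_unit Ha HS HP.
- exists 0 => t Ht; apply: M_unit Ha HS HP _ (ltW Ht).
- exact: G_posdef Ha HS HST HP HU.
- exact: lim_main Ha HS HST HP HY HE HU.
Qed.
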